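(* Let $n>1$ and $m\in\mathbb{N}$, let $\mathcal{Q}_m=\bigoplus_{t=0}^mH_t\subseteq H^2(\mathbb{T}^n)$, and let $p=\sum_{|k|=m}a_kz^k\in H_m$ be a homogeneous polynomial of degree $m$ with $\|p\|_2=1$. If $a_k\neq0$ and $a_l\neq0$ for some $k\neq l$ in $\mathbb{Z}_+^n$, then $S_p=P_{\mathcal{Q}_m}T_p|_{\mathcal{Q}_m}$ is not liftable, i.e. there is no $\varphi\in\mathcal{S}(\mathbb{D}^n)$ with $S_p=P_{\mathcal{Q}_m}T_\varphi|_{\mathcal{Q}_m}$.
   Context: $H_t$ is the space of homogeneous polynomials of degree $t$ in $z_1,\dots,z_n$, viewed inside the Hardy space $H^2(\mathbb{T}^n)$ with norm $\|\cdot\|_2$; $|k|=k_1+\dots+k_n$. $T_\varphi f=\varphi f$, $P_{\mathcal{Q}_m}$ the orthogonal projection onto $\mathcal{Q}_m$, $\mathcal{S}(\mathbb{D}^n)$ the closed unit ball of $H^\infty(\mathbb{D}^n)$. *)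

(* Defs.v *)
From HB Require Import structures.
From mathcomp Require Import all_boot all_order all_algebra.
From mathcomp Require Import complex.
From mathcomp Require Import Rstruct.
From mathcomp Require Import mpoly.
From Stdlib Require Reals.

Set Implicit Arguments.
Unset Strict Implicit.
Unset Printing Implicit Defensive.

Import Order.TTheory GRing.Theory Num.Theory.
Local Open Scope ring_scope.

Definition CC : Type := complex Rdefinitions.R.

Definition mono (n : nat) (z : 'I_n -> CC) (a : 'X_{1..n}) : CC :=
  \prod_(i < n) z i ^+ a i.

Definition taylor_partial (n : nat) (c : 'X_{1..n} -> CC) (z : 'I_n -> CC)
  (N : nat) : CC :=
  \sum_(a : 'X_{1..n < N}) c (val a) * mono z (val a).

(* c is the Taylor coefficient family of an element of the closed unit ball
   S(D^n) of H^oo(D^n): at every point z of the open polydisc D^n the series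
   sum_a c_a z^a converges absolutely (so it defines a holomorphic function
   phi on D^n, phi(z) = lim_N taylor_partial c z N), and |phi(z)| <= 1,
   i.e. for every eps > 0 the partial sums eventually have modulus <= 1+eps. *)
Definition in_Schur_class (n : nat) (c : 'X_{1..n} -> CC) : Prop :=
  forall z : 'I_n -> CC, (forall i, `|z i| < 1) ->
    (exists B : CC, forall N : nat,
        \sum_(a : 'X_{1..n < N}) `|c (val a) * mono z (val a)| <= B)
    /\ (forall eps : CC, 0 < eps -> exists N0 : nat, forall N : nat,
          (N0 <= N)%N -> `|taylor_partial c z N| <= 1 + eps).

(* f lies in Q_m = H_0 (+) ... (+) H_m, i.e. f is a polynomial of total
   degree <= m. *)
Definition in_Qm (n m : nat) (f : {mpoly CC[n]}) : Prop :=
  forall k, k \in msupp f -> (mdeg k <= m)%N.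

Definition in_Hm (n m : nat) (p : {mpoly CC[n]}) : Prop :=
  forall k, k \in msupp p -> mdeg k = m.

(* Squared H^2(T^n) norm of a polynomial: sum_k |a_k|^2. *)
Definition H2norm2 (n : nat) (p : {mpoly CC[n]}) : CC :=
  \sum_(k <- msupp p) `|p@_k| ^+ 2.

(* Coefficient of z^b in (T_phi f) = phi * f, where phi has Taylor
   coefficients c and f is a polynomial:
   (phi f)_b = sum_{a + g = b} c_a f_g. *)
Definition mul_coef (n : nat) (c : 'X_{1..n} -> CC) (f : {mpoly CC[n]})
  (b : 'X_{1..n}) : CC :=
  \sum_(g <- msupp f) \sum_(a : 'X_{1..n < (mdeg b).+1})
     (if (val a + g)%MM == b then c (val a) * f@_g else 0).

(* P_{Q_m} T_phi |_{Q_m} = P_{Q_m} T_p |_{Q_m}  (as operators on Q_m):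
   for every f in Q_m, the functions phi*f and p*f have the same Fourier
   coefficients of total degree <= m. *)
Definition same_compression (n m : nat) (c : 'X_{1..n} -> CC)
  (p : {mpoly CC[n]}) : Prop :=
  forall f : {mpoly CC[n]}, in_Qm m f ->
    forall b : 'X_{1..n}, (mdeg b <= m)%N -> mul_coef c f b = (p * f)@_b.

(* Main.v *)
Require Import Defs.
From HB Require Import structures.
From mathcomp Require Import all_boot all_order all_algebra.
From mathcomp Require Import complex Rstruct mpoly.
From mathcomp Require Import all_field cyclic.
From mathcomp Require Import ring lra.
Import Order.TTheory GRing.Theory Num.Theory.
Local Open Scope ring_scope.

Lemma CC_prim_root_exists {M : nat} : (0 < M)%N -> exists z : CC, M.-primitive_root z.
Proof.
pose q : {poly CC} := 'X^M - 1; have [r Dp] := closed_field_poly_normal q.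
move=> M_gt0; rewrite (monicP _) ?monicXnsubC // scale1r in Dp.
have rn1: all M.-unity_root r by apply/allP=> z; rewrite -root_prod_XsubC -Dp.
have sz_r: (M < (size r).+1)%N.
  by rewrite -(size_prod_XsubC r id) -Dp size_XnsubC.
have [|z] := hasP (has_prim_root M_gt0 rn1 _ sz_r); last by exists z.
by rewrite -separable_prod_XsubC -Dp separable_Xn_sub_1 // pnatr_eq0 -lt0n.
Qed.

Lemma prim_norm1 {M : nat} {w : CC} : M.-primitive_root w -> `|w| = 1.
Proof.
move=> pw; have M0 : (0 < M)%N by case/andP: pw.
apply/eqP; rewrite -(pexpr_eq1 M0) //.
by rewrite -normrX (prim_expr_order pw) normr1.
Qed.

Lemma prim_conj {M : nat} {w : CC} : M.-primitive_root w -> w * w^* = 1.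
Proof. by move=> pw; rewrite -normCK (prim_norm1 pw) expr1n. Qed.

Lemma unit_conj (x : CC) : `|x| = 1 -> x * x^* = 1.
Proof. by move=> h; rewrite -normCK h expr1n. Qed.

Lemma geom_root {M : nat} {w : CC} (A B : nat) : M.-primitive_root w ->
  \sum_(t < M) (w ^+ A * w^* ^+ B) ^+ t = if A == B %[mod M] then M%:R else 0.
Proof.
move=> pw; have wc := prim_conj pw.
have key : w ^+ B * (w ^+ A * w^* ^+ B) = w ^+ A.
  by rewrite mulrCA -exprMn wc expr1n mulr1.
case: ifP => hAB.
  have -> : w ^+ A * w^* ^+ B = 1.
    move: hAB; rewrite -(eq_prim_root_expr pw) => /eqP ->.
    by rewrite -exprMn wc expr1n.
  by rewrite (eq_bigr (fun _ => 1)) ?sumr_const ?card_ord // => i _; rewrite expr1n.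
set x := _ * _.
have x1 : x != 1.
  apply/eqP => x1; move: hAB; rewrite -(eq_prim_root_expr pw).
  by rewrite -key -/x x1 mulr1 eqxx.
have xM : x ^+ M = 1.
  rewrite /x exprMn -!exprM mulnC exprM (prim_expr_order pw) expr1n mul1r.
  by rewrite mulnC exprM -rmorphXn (prim_expr_order pw) rmorph1 expr1n.
have : (x - 1) * \sum_(t < M) x ^+ t = 0 by rewrite -subrX1 xM subrr.
by move/eqP; rewrite mulf_eq0 subr_eq0 (negbTE x1) /= => /eqP.
Qed.


Lemma sum_single (n N : nat) (k : 'X_{1..n}) (F : 'X_{1..n} -> CC) :
  (mdeg k < N)%N ->
  \sum_(a : 'X_{1..n < N}) (if val a == k then F (val a) else 0) = F k.
Proof.
move=> hk; rewrite (bigD1 (BMultinom hk)) //= eqxx big1 ?addr0 // => a ha.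
case: eqP => // ea; move: ha; suff -> : a = BMultinom hk by rewrite eqxx.
by apply: val_inj.
Qed.

Lemma sum_conv (n N : nat) (s : seq 'X_{1..n}) (F : 'X_{1..n} -> CC) :
  uniq s -> (forall k, k \in s -> (mdeg k < N)%N) ->
  (forall k, k \notin s -> F k = 0) ->
  \sum_(a : 'X_{1..n < N}) F (val a) = \sum_(k <- s) F k.
Proof.
move=> us hs hF.
rewrite [RHS](eq_big_seq (fun k => \sum_(a : 'X_{1..n < N})
   (if val a == k then F (val a) else 0))); last first.
  by move=> k ks; rewrite sum_single // hs.
rewrite exchange_big /=; apply: eq_bigr => a _.
case ha: (val a \in s).
  rewrite -big_mkcond /= big_const_seq.
  have -> : count [pred i | val a == i] s = 1%N.
    have := count_uniq_mem (val a) us; rewrite ha /= => <-.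
    by apply: eq_count => i /=; rewrite eq_sym.
  by rewrite /= addr0.
by rewrite big1 ?hF ?ha // => k _; case: ifP.
Qed.

Lemma stepA (n m : nat) (c : 'X_{1..n} -> CC) (p : {mpoly CC[n]}) :
  same_compression m c p -> forall b, (mdeg b <= m)%N -> c b = p@_b.
Proof.
move=> hs b hb.
have q1 : in_Qm m (1 : {mpoly CC[n]}).
  by move=> k; rewrite (@msupp1 n CC) inE => /eqP ->; rewrite mdeg0.
have := hs 1 q1 b hb; rewrite mulr1 /mul_coef (@msupp1 n CC) big_seq1 => <-.
rewrite -(@sum_single n _ b (fun a => c a) (ltnSn _)).
by apply: eq_bigr => a _; rewrite addm0 mcoeff1 eqxx mulr1.
Qed.


Lemma mono_add (n : nat) (z : 'I_n -> CC) (a b : 'X_{1..n}) :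
  mono z (a + b)%MM = mono z a * mono z b.
Proof. by rewrite /mono -big_split; apply: eq_bigr => i _; rewrite mnmDE exprD. Qed.

Lemma mono0 (n : nat) (z : 'I_n -> CC) : mono z 0%MM = 1.
Proof. by rewrite /mono big1 // => i _; rewrite mnm0E expr0. Qed.

Lemma mono_conj (n : nat) (z : 'I_n -> CC) (a : 'X_{1..n}) :
  (mono z a)^* = mono (fun i => (z i)^*) a.
Proof. by rewrite /mono rmorph_prod; apply: eq_bigr => i _; rewrite rmorphXn. Qed.

Definition zj {n M : nat} (w : CC) (j : {ffun 'I_n -> 'I_M}) : 'I_n -> CC :=
  fun i => w ^+ (j i).

Lemma grid_orth (n M : nat) (w : CC) (u v : 'X_{1..n}) :
  M.-primitive_root w -> (forall i, u i < M)%N -> (forall i, v i < M)%N ->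
  \sum_(j : {ffun 'I_n -> 'I_M}) mono (zj w j) u * (mono (zj w j) v)^*
    = if u == v then M%:R ^+ n else 0.
Proof.
move=> pw hu hv.
have E : forall j : {ffun 'I_n -> 'I_M}, mono (zj w j) u * (mono (zj w j) v)^*
   = \prod_i (w ^+ u i * w^* ^+ v i) ^+ (j i).
  move=> j; rewrite mono_conj /mono -big_split; apply: eq_bigr => i _ /=.
  by rewrite /zj rmorphXn -!exprM exprMn -!exprM mulnC [(v i * _)%N]mulnC.
rewrite (eq_bigr _ (fun j _ => E j)).
rewrite -(bigA_distr_bigA (fun i (t : 'I_M) => (w ^+ u i * w^* ^+ v i) ^+ t)) /=.
rewrite (eq_bigr (fun i => if u i == v i then M%:R else 0)); last first.
  by move=> i _; rewrite geom_root // !modn_small.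
case: eqP => [->|neq].
  by rewrite (eq_bigr (fun _ => M%:R)) ?prodr_const ?card_ord // => i _; rewrite eqxx.
have [i hi] : exists i, u i != v i.
  case: (boolP [exists i, u i != v i]) => [/existsP //|/existsPn h].
  by exfalso; apply: neq; apply/mnmP => i; apply/eqP; have := h i; rewrite negbK.
by rewrite (bigD1 i) //= (negbTE hi) mul0r.
Qed.

Definition pv {n : nat} (p : {mpoly CC[n]}) (z : 'I_n -> CC) : CC :=
  \sum_(k <- msupp p) p@_k * mono z k.

Lemma grid_id (n M : nat) (w : CC) (p : {mpoly CC[n]}) (u v : 'X_{1..n}) :
  M.-primitive_root w ->
  (forall a, a \in msupp p -> forall i, ((a + u)%MM i < M)%N /\ ((a + v)%MM i < M)%N) ->
  \sum_(j : {ffun 'I_n -> 'I_M})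
     pv p (zj w j) * (pv p (zj w j))^* * (mono (zj w j) u * (mono (zj w j) v)^*)
  = \sum_(a <- msupp p) \sum_(b <- msupp p)
       p@_a * (p@_b)^* * (if (a + u)%MM == (b + v)%MM then M%:R ^+ n else 0).
Proof.
move=> pw hb.
have E : forall j : {ffun 'I_n -> 'I_M},
  pv p (zj w j) * (pv p (zj w j))^* * (mono (zj w j) u * (mono (zj w j) v)^*)
  = \sum_(a <- msupp p) \sum_(b <- msupp p) p@_a * (p@_b)^* *
      (mono (zj w j) (a + u)%MM * (mono (zj w j) (b + v)%MM)^*).
  move=> j; rewrite /pv rmorph_sum big_distrl /= big_distrl /=.
  apply: eq_bigr => a _; rewrite big_distrr /= big_distrl /=.
  apply: eq_bigr => b _; rewrite !mono_add !rmorphM /=.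
  ring.
rewrite (eq_bigr _ (fun j _ => E j)) exchange_big /=.
rewrite big_seq_cond [RHS]big_seq_cond; apply: eq_bigr => a /andP [ha _].
rewrite exchange_big /= big_seq_cond [RHS]big_seq_cond; apply: eq_bigr => b /andP [hb' _].
rewrite -mulr_sumr grid_orth //.
  by move=> i; case: (hb a ha i).
by move=> i; case: (hb b hb' i).
Qed.



Lemma ex_max (d : Order.disp_t) (T : orderType d) (s : seq T) x0 :
  x0 \in s -> exists2 x, x \in s & forall y, y \in s -> (y <= x)%O.
Proof.
elim: s x0 => // a s IH x0 _; case: s IH => [|b s] IH.
  by exists a; rewrite ?mem_head // => y; rewrite inE => /eqP ->.
have [x xs hx] := IH b (mem_head _ _).
case: (leP a x) => h.
  exists x; first by rewrite in_cons xs orbT.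
  by move=> y; rewrite in_cons => /orP [/eqP ->|/hx].
exists a; rewrite ?mem_head // => y; rewrite inE => /orP [/eqP ->//|/hx hy].
exact: (le_trans hy (ltW h)).
Qed.

Lemma ex_min (d : Order.disp_t) (T : orderType d) (s : seq T) x0 :
  x0 \in s -> exists2 x, x \in s & forall y, y \in s -> (x <= y)%O.
Proof.
elim: s x0 => // a s IH x0 _; case: s IH => [|b s] IH.
  by exists a; rewrite ?mem_head // => y; rewrite inE => /eqP ->.
have [x xs hx] := IH b (mem_head _ _).
case: (leP x a) => h.
  exists x; first by rewrite in_cons xs orbT.
  by move=> y; rewrite in_cons => /orP [/eqP ->|/hx].
exists a; rewrite ?mem_head // => y; rewrite inE => /orP [/eqP ->//|/hx hy].
exact: (le_trans (ltW h) hy).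
Qed.

Lemma comp_le_mdeg (n : nat) (a : 'X_{1..n}) i : (a i <= mdeg a)%N.
Proof. by rewrite mdegE (bigD1 i) //= leq_addr. Qed.

Lemma sum_diag (n : nat) (s : seq 'X_{1..n}) (F : 'X_{1..n} -> 'X_{1..n} -> CC) :
  uniq s ->
  \sum_(a <- s) \sum_(b <- s) (if a == b then F a b else 0) = \sum_(a <- s) F a a.
Proof.
move=> us; rewrite big_seq_cond [RHS]big_seq_cond; apply: eq_bigr => a /andP [ha _].
rewrite (bigD1_seq a) //= eqxx big1 ?addr0 // => b; rewrite eq_sym => /negbTE ->.
by [].
Qed.

Lemma stepC (n m M : nat) (w : CC) (p : {mpoly CC[n]}) :
  M.-primitive_root w -> (m.*2 < M)%N -> in_Hm m p -> H2norm2 p = 1 ->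
  (exists k l : 'X_{1..n}, [/\ k != l, p@_k != 0 & p@_l != 0]) ->
  (forall j : {ffun 'I_n -> 'I_M}, `|pv p (zj w j)| <= 1) -> False.
Proof.
move=> pw hM hH hn [k [l [kl pk pl]]] hle.
set s := msupp p.
have M0 : (0 < M)%N by case/andP: pw.
set N : CC := M%:R ^+ n.
have N0 : N != 0 by rewrite expf_eq0 pnatr_eq0 negb_and -lt0n M0 orbT.
have us : uniq s := msupp_uniq p.
have hcomp : forall a, a \in s -> forall i, (a i <= m)%N.
  by move=> a ha i; rewrite -(hH a ha) comp_le_mdeg.
have hbnd : forall u v, u \in s -> v \in s -> forall a, a \in s -> forall i,
   ((a + u)%MM i < M)%N /\ ((a + v)%MM i < M)%N.
  move=> u v hu hv a ha i; rewrite !mnmDE; split; apply: leq_ltn_trans hM;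
  by rewrite -addnn leq_add // hcomp.
have hbnd0 : forall a, a \in s -> forall i,
   ((a + 0)%MM i < M)%N /\ ((a + 0)%MM i < M)%N.
  move=> a ha i; rewrite addm0; split; apply: leq_ltn_trans hM;
  by rewrite -addnn (leq_trans (hcomp a ha i)) ?leq_addr.
have H2 : \sum_(a <- s) p@_a * (p@_a)^* * N = N.
  by rewrite -mulr_suml -[RHS]mul1r -hn /H2norm2; congr (_ * _);
     apply: eq_bigr => a _; rewrite normCK.
have S00 : \sum_(j : {ffun 'I_n -> 'I_M}) pv p (zj w j) * (pv p (zj w j))^* = N.
  rewrite -[RHS]H2 -(@sum_diag n s (fun a b => p@_a * (p@_b)^* * N) us).
  have := @grid_id n M w p 0%MM 0%MM pw hbnd0.
  rewrite (eq_bigr (fun j => pv p (zj w j) * (pv p (zj w j))^*)); last first.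
    by move=> j _; rewrite mono0 rmorph1 !mulr1.
  move=> ->; apply: eq_bigr => a _; apply: eq_bigr => b _; rewrite !addm0.
  by case: ifP; rewrite ?mulr0.
have all1 : forall j : {ffun 'I_n -> 'I_M}, pv p (zj w j) * (pv p (zj w j))^* = 1.
  move=> j.
  have hs : \sum_(j : {ffun 'I_n -> 'I_M}) (1 - pv p (zj w j) * (pv p (zj w j))^*) = 0.
    rewrite sumrB S00 sumr_const card_ffun !card_ord.
    by rewrite /N -natrX -mulr_natr mul1r subrr.
  apply/eqP; rewrite eq_sym -subr_eq0; apply/eqP.
  move: hs => /psumr_eq0P; apply => // i _.
  by rewrite subr_ge0 -normCK exprn_ile1.
have ks : k \in s by rewrite mcoeff_msupp.
have ls : l \in s by rewrite mcoeff_msupp.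
have [k0 k0s hk0] := @ex_max _ _ s k ks.
have [l0 l0s hl0] := @ex_min _ _ s k ks.
have kl0 : l0 != k0.
  apply: contra kl => /eqP e; apply/eqP; apply: le_anti; apply/andP; split.
    by rewrite (le_trans (hk0 k ks)) // -e hl0.
  by rewrite (le_trans (hk0 l ls)) // -e hl0.
have := @grid_id n M w p l0 k0 pw (hbnd l0 k0 l0s k0s).
rewrite (eq_bigr (fun j => mono (zj w j) l0 * (mono (zj w j) k0)^*)); last first.
  by move=> j _; rewrite all1 mul1r.
rewrite (@grid_orth n M w l0 k0 pw) ?(negbTE kl0); last 2 first.
- by move=> i; apply: leq_ltn_trans hM; rewrite -addnn (leq_trans (hcomp _ l0s i)) ?leq_addr.
- by move=> i; apply: leq_ltn_trans hM; rewrite -addnn (leq_trans (hcomp _ k0s i)) ?leq_addr.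
move=> S2.
rewrite (bigD1_seq k0) //= (bigD1_seq l0) //= addmC eqxx in S2.
rewrite big1 ?addr0 in S2; last first.
  by move=> b /negbTE hb; rewrite eqm_add2r eq_sym hb mulr0.
rewrite big1_seq ?addr0 in S2; last first.
  move=> a /andP [ha as_]; rewrite big1_seq // => b /andP [_ bs].
  case: eqP => [e|_]; last by rewrite mulr0.
  exfalso.
  have lt1 : ((a + l0)%MM < (k0 + l0)%MM)%O.
    by rewrite ltmc_add2l lt_neqAle ha hk0.
  have le2 : ((k0 + l0)%MM <= (b + k0)%MM)%O.
    by rewrite [(k0 + _)%MM]addmC lemc_add2l hl0.
  by move: (lt_le_trans lt1 le2); rewrite e ltxx.
move/esym/eqP: S2; rewrite !mulf_eq0 (negbTE N0) orbF.
by rewrite conjC_eq0 !mcoeff_eq0 k0s l0s.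
Qed.


Lemma bern_down (R : realFieldType) (h : R) (m : nat) :
  0 <= h -> h <= 1 -> 1 - m%:R * h <= (1 - h) ^+ m.
Proof.
move=> h0 h1; elim: m => [|m IH]; first by rewrite mul0r subr0 expr0.
rewrite exprS -natr1.
have e0 : 0 <= 1 - h by lra.
have : (1 - h) * (1 - m%:R * h) <= (1 - h) * (1 - h) ^+ m by rewrite ler_wpM2l.
have mh : 0 <= m%:R * h by rewrite mulr_ge0 ?ler0n.
nra.
Qed.

Lemma bern_up (R : realFieldType) (s : R) (L : nat) :
  0 <= s -> 1 + L%:R * s <= (1 + s) ^+ L.
Proof.
move=> s0; elim: L => [|L IH]; first by rewrite mul0r addr0 expr0.
rewrite exprS -natr1.
have e0 : 0 <= 1 + s by lra.
have : (1 + s) * (1 + L%:R * s) <= (1 + s) * (1 + s) ^+ L by rewrite ler_wpM2l.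
have mh : 0 <= L%:R * s by rewrite mulr_ge0 ?ler0n.
nra.
Qed.

Lemma geom_small (R : archiRealFieldType) (q B eps : R) (m : nat) :
  0 < q -> q < 1 -> 0 < eps -> exists L, (m < L)%N /\ q ^+ L * B <= eps.
Proof.
move=> q0 q1 e0.
have [B0|Bp] := lerP B 0.
  exists m.+1; split => //; apply: le_trans (ltW e0).
  by rewrite mulr_ge0_le0 // exprn_ge0 // ltW.
set s := q^-1 - 1.
have s0 : 0 < s by rewrite subr_gt0 invf_gt1.
set K := B / (eps * s).
have K0 : 0 <= K by rewrite divr_ge0 ?ltW // mulr_gt0.
set L := (m + Num.Def.archi_bound K).+1.
exists L; split; first by rewrite ltnS leq_addr.
have hK : K <= L%:R.
  apply: ltW; apply: lt_le_trans (archi_boundP K0) _.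
  by rewrite ler_nat /L ltnW // ltnS leq_addl.
have qL : 0 < q ^+ L by rewrite exprn_gt0.
have hb := @bern_up R s L (ltW s0).
have E : q ^+ L * (1 + s) ^+ L = 1.
  by rewrite /s addrC subrK -exprMn divff ?gt_eqF // expr1n.
have Ls : K * s <= L%:R * s by rewrite ler_pM2r.
have KsE : K * s * eps = B by rewrite /K; field; rewrite ?gt_eqF //.
(* q^L * B = q^L * K s eps <= q^L * L s * eps <= q^L (1+s)^L eps = eps *)
rewrite -KsE.
have h1 : q ^+ L * (K * s * eps) <= q ^+ L * ((1 + s) ^+ L) * eps.
  have Xe : 0 < q ^+ L * eps by rewrite mulr_gt0.
  have ZY : K * s <= (1 + s) ^+ L.
    apply: le_trans Ls _; apply: le_trans _ hb; lra.
  set X := q ^+ L in Xe *; set Y := (1 + s) ^+ L in ZY *; set Z := K * s in ZY *.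
  nra.
by rewrite E mul1r in h1.
Qed.

Lemma R1 (R : archiRealFieldType) (a : R) (m : nat) :
  (forall r', 0 < r' -> r' < 1 -> exists B, forall r, 0 < r -> r < r' ->
     forall eps, 0 < eps -> forall L, (m < L)%N ->
       r ^+ m * a <= 1 + eps + (r / r') ^+ L * B) -> a <= 1.
Proof.
move=> H; case: (lerP a 1) => // a1; exfalso.
set d := a - 1.
have d0 : 0 < d by rewrite /d subr_gt0.
have a0 : 0 < a by apply: lt_trans a1.
set M1 : R := m%:R + 1.
have M10 : 1 <= M1 by rewrite /M1 lerDr ler0n.
have m0 : 0 <= m%:R :> R by rewrite ler0n.
set h := d / (2 * a * M1).
have hE : h * (2 * a * M1) = d by rewrite /h mulfVK // mulf_neq0 ?mulf_neq0 ?gt_eqF //; lra.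
have h0 : 0 < h by rewrite /h divr_gt0 // !mulr_gt0 //; lra.
have h1 : h <= 1 / 2.
  have : h * (2 * a * M1) <= 1 / 2 * (2 * a * M1) by rewrite hE /d; nra.
  by rewrite ler_pM2r // !mulr_gt0 //; lra.
set r := 1 - h; set r' := 1 - h / 2.
have r'0 : 0 < r' by rewrite /r'; lra.
have r'1 : r' < 1 by rewrite /r'; lra.
have [B HB] := H r' r'0 r'1.
have r0 : 0 < r by rewrite /r; lra.
have rr' : r < r' by rewrite /r /r'; lra.
have q0 : 0 < r / r' by rewrite divr_gt0.
have q1 : r / r' < 1 by rewrite ltr_pdivrMr // mul1r.
have e0 : 0 < d / 8 by rewrite divr_gt0 //.
have [L [mL hL]] := @geom_small R (r / r') B (d / 8) m q0 q1 e0.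
have := HB r r0 rr' (d / 8) e0 L mL.
have hle1 : h <= 1 by lra.
have bd := @bern_down R h m (ltW h0) hle1.
have bdm : (1 - m%:R * h) * a <= r ^+ m * a by rewrite ler_wpM2r // ltW.
have E1 : (1 - m%:R * h) * a = a - m%:R * (h * a) by ring.
have E2 : m%:R * (h * a) = d / 2 - h * a.
  by rewrite -hE /M1; field.
have ha : 0 < h * a by rewrite mulr_gt0.
rewrite E1 E2 in bdm.
rewrite /d in hL e0 d0 bdm *.
lra.
Qed.


Lemma mono_scale (n : nat) (x : CC) (z : 'I_n -> CC) (a : 'X_{1..n}) :
  mono (fun i => x * z i) a = x ^+ mdeg a * mono z a.
Proof.
rewrite /mono (eq_bigr (fun i => x ^+ a i * z i ^+ a i)); last by move=> i _; rewrite exprMn.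
by rewrite big_split /= prodrXr -mdegE.
Qed.

Lemma norm_mono (n : nat) (z : 'I_n -> CC) (a : 'X_{1..n}) :
  (forall i, `|z i| = 1) -> `|mono z a| = 1.
Proof.
move=> hz; rewrite /mono normr_prod big1 // => i _.
by rewrite normrX hz expr1n.
Qed.

Lemma fin_choice (L : nat) (P : nat -> nat -> Prop) :
  (forall j, (j < L)%N -> exists N0, forall N, (N0 <= N)%N -> P j N) ->
  exists N1, forall j, (j < L)%N -> forall N, (N1 <= N)%N -> P j N.
Proof.
elim: L => [|L IH] H; first by exists 0%N.
have [N1 H1] := IH (fun j hj => H j (ltnW hj)).
have [N0 H0] := H L (ltnSn L).
exists (maxn N1 N0) => j; rewrite ltnS leq_eqVlt => /orP [/eqP ->|hj] N hN.
  by apply: H0; apply: leq_trans hN; rewrite leq_maxr.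
by apply: H1 => //; apply: leq_trans hN; rewrite leq_maxl.
Qed.

Lemma coef_zero {n m : nat} {p : {mpoly CC[n]}} {a : 'X_{1..n}} :
  in_Hm m p -> mdeg a != m -> p@_a = 0.
Proof.
move=> hH ha; apply: memN_msupp_eq0; apply: contra ha => h.
by rewrite (hH a h).
Qed.

Lemma stepB_core (n m : nat) (p : {mpoly CC[n]}) (c : 'X_{1..n} -> CC)
  (zeta : 'I_n -> CC) (q R' B eps : CC) (L : nat) :
  in_Schur_class c -> (forall b, (mdeg b <= m)%N -> c b = p@_b) -> in_Hm m p ->
  (forall i, `|zeta i| = 1) -> 0 <= q -> q <= 1 -> 0 <= R' -> R' < 1 ->
  (forall N, \sum_(a : 'X_{1..n < N}) `|c (val a) * mono (fun i => R' * zeta i) (val a)| <= B) ->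
  0 < eps -> (m < L)%N ->
  (q * R') ^+ m * `|pv p zeta| <= 1 + eps + q ^+ L * B.
Proof.
move=> hS hc hH hz q0 q1 R'0 R'1 hB e0 mL.
set R := q * R'.
have R0 : 0 <= R by rewrite mulr_ge0.
have R1 : R < 1.
  apply: le_lt_trans R'1; rewrite /R -[X in _ <= X]mul1r; exact: ler_wpM2r.
have L0 : (0 < L)%N by apply: leq_ltn_trans mL.
have [w pw] := CC_prim_root_exists L0.
have wn : `|w| = 1 := prim_norm1 pw.
pose z (j : nat) := fun i => (R * w ^+ j) * zeta i.
have hzj : forall j i, `|z j i| < 1.
  by move=> j i; rewrite /z !normrM normrX wn expr1n mulr1 hz mulr1 (ger0_norm q0) (ger0_norm R'0).
have [N1 HN1] : exists N1, forall j, (j < L)%N -> forall N, (N1 <= N)%N ->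
    `|taylor_partial c (z j) N| <= 1 + eps.
  apply: (@fin_choice L (fun j N => `|taylor_partial c (z j) N| <= 1 + eps)).
  by move=> j _; have [_ h] := hS (z j) (hzj j); exact: h.
set N := maxn N1 m.+1.
have hN1 : (N1 <= N)%N by rewrite leq_maxl.
have hmN : (m < N)%N by rewrite leq_maxr.
set T := fun a : 'X_{1..n} => c a * R ^+ mdeg a * mono zeta a.
have Avg : \sum_(j < L) (w^* ^+ m) ^+ j * taylor_partial c (z j) N
   = L%:R * \sum_(a : 'X_{1..n < N}) (if mdeg a == m %[mod L] then T a else 0).
  rewrite /taylor_partial.
  rewrite (eq_bigr (fun j : 'I_L => \sum_(a : 'X_{1..n < N})
      T a * (w ^+ mdeg a * w^* ^+ m) ^+ j)); last first.
    move=> j _; rewrite mulr_sumr; apply: eq_bigr => a _.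
    rewrite /z (@mono_scale n (R * w ^+ j) zeta) /T [(R * _) ^+ _]exprMn.
    rewrite [(w ^+ j) ^+ _]exprAC [(w ^+ mdeg _ * _) ^+ j]exprMn /=.
    ring.
  rewrite exchange_big mulr_sumr; apply: eq_bigr => a _.
  rewrite -mulr_sumr geom_root //.
  by case: ifP; rewrite ?mulr0 ?mul0r // mulrC.
have Split : \sum_(a : 'X_{1..n < N}) (if mdeg a == m %[mod L] then T a else 0)
   = \sum_(a : 'X_{1..n < N}) (if mdeg a == m then T a else 0)
   + \sum_(a : 'X_{1..n < N}) (if (mdeg a == m %[mod L]) && (mdeg a != m) then T a else 0).
  rewrite -big_split; apply: eq_bigr => a _ /=.
  case: (eqVneq (mdeg a) m) => [->|ne]; rewrite ?eqxx /= ?addr0 //.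
  by rewrite andbT add0r.
have Main : \sum_(a : 'X_{1..n < N}) (if mdeg a == m then T a else 0)
   = R ^+ m * pv p zeta.
  rewrite (eq_bigr (fun a : 'X_{1..n < N} => R ^+ m * (p@_(val a) * mono zeta (val a)))); last first.
    move=> a _; case: eqP => [e|/eqP ne].
      by rewrite /T e hc ?e // -mulrA mulrCA.
    by rewrite (coef_zero hH ne) mul0r mulr0.
  rewrite -mulr_sumr /pv; congr (_ * _).
  apply: (@sum_conv n N (msupp p) (fun k => p@_k * mono zeta k)).
  - exact: msupp_uniq.
  - by move=> k hk; rewrite (hH k hk).
  - by move=> k hk; rewrite (memN_msupp_eq0 hk) mul0r.
have Tail : `|\sum_(a : 'X_{1..n < N})
     (if (mdeg a == m %[mod L]) && (mdeg a != m) then T a else 0)| <= q ^+ L * B.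
  apply: le_trans (ler_norm_sum _ _ _) _.
  apply: le_trans (ler_wpM2l (exprn_ge0 L q0) (hB N)); rewrite mulr_sumr.
  apply: ler_sum => a _.
  have nn : 0 <= q ^+ L * `|c (val a) * mono (fun i => R' * zeta i) (val a)|.
    by rewrite mulr_ge0 ?exprn_ge0.
  case: ifP => [/andP [hmod hne]|_]; last by rewrite normr0.
  case: (ltnP (mdeg a) m) => hlt.
    rewrite /T hc; last exact: ltnW.
    by rewrite (coef_zero hH hne) !mul0r normr0 mulr0.
  have hgt : (m < mdeg a)%N by rewrite ltn_neqAle eq_sym hne hlt.
  have hLa : (L <= mdeg a)%N.
    move: hmod; rewrite eqn_mod_dvd; last exact: ltnW.
    move=> hd.
    apply: leq_trans (dvdn_leq _ hd) _; first by rewrite subn_gt0.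
    exact: leq_subr.
  rewrite /T (@mono_scale n R' zeta) !normrM norm_mono // !mulr1 !normrX.
  rewrite (ger0_norm R0) (ger0_norm R'0) /R exprMn mulrCA.
  have hq : q ^+ mdeg a <= q ^+ L by exact: ler_wiXn2l.
  have h0 : 0 <= `|c a| * R' ^+ mdeg a by rewrite mulr_ge0 ?exprn_ge0.
  by apply: ler_pM => //; apply: exprn_ge0.
set A := \sum_(j < L) (w^* ^+ m) ^+ j * taylor_partial c (z j) N.
set Y := \sum_(a : 'X_{1..n < N}) (if (mdeg a == m %[mod L]) && (mdeg a != m) then T a else 0).
have AbsA : `|A| <= L%:R * (1 + eps).
  apply: le_trans (ler_norm_sum _ _ _) _.
  have -> : L%:R * (1 + eps) = \sum_(j < L) (1 + eps).
    by rewrite sumr_const card_ord mulr_natl.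
  apply: ler_sum => j _; rewrite normrM !normrX norm_conjC wn !expr1n mul1r.
  exact: HN1 (ltn_ord j) N hN1.
have Lp : 0 < L%:R :> CC by rewrite ltr0n.
have EX : R ^+ m * pv p zeta = L%:R^-1 * A - Y.
  rewrite /A Avg Split Main mulrA mulVf ?gt_eqF // mul1r.
  by rewrite -/Y addrK.
have -> : R ^+ m * `|pv p zeta| = `|R ^+ m * pv p zeta|.
  by rewrite normrM normrX (ger0_norm R0).
rewrite EX; apply: le_trans (ler_normB _ _) _; apply: lerD => //.
by rewrite normrM normfV normr_nat ler_pdivrMl.
Qed.


Notation RR := Rdefinitions.R.
Notation toC := (real_complex RR).

Lemma stepB (n m : nat) (p : {mpoly CC[n]}) (c : 'X_{1..n} -> CC)
  (zeta : 'I_n -> CC) :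
  in_Schur_class c -> (forall b, (mdeg b <= m)%N -> c b = p@_b) -> in_Hm m p ->
  (forall i, `|zeta i| = 1) -> `|pv p zeta| <= 1.
Proof.
move=> hS hc hH hz.
have [a ha] : exists a : RR, `|pv p zeta| = toC a by eexists; apply: normc_def.
rewrite ha -(rmorph1 toC) lecR.
apply: (@R1 RR a m) => r' r'0 r'1.
pose z' := fun i => toC r' * zeta i.
have hz' : forall i, `|z' i| < 1.
  move=> i; rewrite /z' normrM hz mulr1 ger0_norm ?ler0c ?ltW //.
  by rewrite -(rmorph1 toC) ltcR.
have [[B0 HB0] _] := hS z' hz'.
have B00 : 0 <= B0 by apply: le_trans (HB0 0%N); apply: sumr_ge0 => i _.
have [b hb] : exists b : RR, B0 = toC b.
  by apply/complex_realP; apply: ger0_real.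
exists b => r r0 rr' eps e0 L mL.
have q0 : 0 <= r / r' by rewrite divr_ge0 ?ltW.
have q1 : r / r' <= 1 by rewrite ler_pdivrMr // mul1r ltW.
have := @stepB_core n m p c zeta (toC (r / r')) (toC r') B0 (toC eps) L hS hc hH hz.
rewrite ler0c -(rmorph1 toC) lecR ler0c ltcR ltcR.
move=> /(_ q0 q1 (ltW r'0) r'1 HB0 e0 mL).
rewrite hb ha; set q := r / r' => H.
have qE : q * r' = r by rewrite /q divfK // gt_eqF.
clearbody q.
suff : toC ((q * r') ^+ m * a) <= toC (1 + eps + q ^+ L * b).
  by rewrite lecR qE.
rewrite !rmorphD !rmorphM !rmorphXn !rmorphM rmorph1.
exact: H.
Qed.


Theorem corollary3p3 (n m : nat) (p : {mpoly CC[n]}) :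
  (1 < n)%N ->
  in_Hm m p ->
  H2norm2 p = 1 ->
  (exists k l : 'X_{1..n}, [/\ k != l, p@_k != 0 & p@_l != 0]) ->
  ~ (exists c : 'X_{1..n} -> CC, in_Schur_class c /\ same_compression m c p).
Proof.
move=> _ hH hnorm hkl [c [hS hsc]].
have hc := @stepA n m c p hsc.
have M0 : (0 < m.*2.+1)%N by [].
have [w pw] := CC_prim_root_exists M0.
apply: (@stepC n m _ w p pw (ltnSn _) hH hnorm hkl) => j.
apply: (@stepB n m p c _ hS hc hH) => i.
by rewrite /zj normrX (prim_norm1 pw) expr1n.
Qed.
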